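(* Let $\Gamma$, $\varepsilon$, $q$, $E$, $\{e_i:i\in I\}$, $p$, $\pi$ and $R$ be as follows: $\varepsilon$ is a commutation factor on the abelian group $\Gamma$ which can be written as $\varepsilon(\alpha,\beta)=(-1)^{\pi(\alpha)\pi(\beta)}\sigma(\alpha,\beta)/\sigma(\beta,\alpha)$ for some map $\sigma:\Gamma\times\Gamma\to\mathbb{C}\setminus\{0\}$; $E$ is a finite-dimensional $\Gamma$-graded complex vector space with homogeneous basis $\{e_i\}_{i\in I}$, $I$ totally ordered, $\deg e_i=p(i)$; and $R$ is the color Hecke $R$-matrix $$R(e_i\otimes e_j)=\begin{cases} q^{1-2\pi(p(i))}\varepsilon(p(i),p(i))\, e_i\otimes e_i, & i=j,\\ (q-q^{-1})e_i\otimes e_j+\varepsilon(p(i),p(j))\,e_j\otimes e_i, & i<j,\\ \varepsilon(p(i),p(j))\,e_j\otimes e_i,& i>j.\end{cases}$$ Let $\bar R$ be the super (i.e. $\mathbb{Z}_2$-graded) Hecke $R$-matrix on the same space with the $\mathbb{Z}_2$-grading $\delta=\pi\circ p$: $$\bar R(e_i\otimes e_j)=\begin{cases} (-1)^{\delta(i)}q^{1-2\delta(i)}\, e_i\otimes e_i, & i=j,\\ (q-q^{-1})e_i\otimes e_j+(-1)^{\delta(i)\delta(j)}e_j\otimes e_i, & i<j,\\ (-1)^{\delta(i)\delta(j)}e_j\otimes e_i,& i>j,\end{cases}$$ and let $F:E\otimes E\to E\otimes E$ be the invertible diagonal map $F(e_i\otimes e_j)=\sigma(p(i),p(j))\,e_i\otimes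 e_j$. Then $R=F^{-1}\circ\bar R\circ F$; that is, the color Hecke $R$-matrix is obtained from the $\mathbb{Z}_2$-graded Hecke $R$-matrix by the twist determined by $\sigma$ (equivalently, by tensoring with the color exchange operator $\rho_\alpha\otimes\rho_\beta\mapsto \frac{\sigma(\alpha,\beta)}{\sigma(\beta,\alpha)}\rho_\beta\otimes\rho_\alpha$ on the degree-tracking factors).
   Context: A commutation factor on $\Gamma$ is a map $\varepsilon:\Gamma\times\Gamma\to\mathbb{C}\setminus\{0\}$ with $\varepsilon(\alpha,\beta)\varepsilon(\beta,\alpha)=1$ and $\varepsilon(\alpha+\beta,\gamma)=\varepsilon(\alpha,\gamma)\varepsilon(\beta,\gamma)$. $\pi:\Gamma\to\{0,1\}$ is defined by $\pi(\alpha)=0$ if $\varepsilon(\alpha,\alpha)=1$ and $\pi(\alpha)=1$ if $\varepsilon(\alpha,\alpha)=-1$; $\Gamma_0=\pi^{-1}(0)$ is a subgroup of index at most 2 and $\pi$ is the quotient map $\Gamma\to\Gamma/\Gamma_0\subseteq\mathbb{Z}_2$. $q\in\mathbb{C}\setminus\{0\}$. *)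

(* Defs.v *)
From HB Require Import structures.
From mathcomp Require Import all_boot all_order all_algebra.
From mathcomp Require Import complex.
From mathcomp Require Import reals.
Set Implicit Arguments. Unset Strict Implicit. Unset Printing Implicit Defensive.
Import Order.TTheory GRing.Theory Num.Theory.
Local Open Scope ring_scope.

Definition commutation_factor (Gamma : zmodType) (K : fieldType)
  (eps : Gamma -> Gamma -> K) : Prop :=
  (forall a b, eps a b != 0) /\
  (forall a b, eps a b * eps b a = 1) /\
  (forall a b c, eps (a + b) c = eps a c * eps b c).

Definition cpi (Gamma : zmodType) (K : fieldType)
  (eps : Gamma -> Gamma -> K) (a : Gamma) : nat :=
  if eps a a == 1 then 0%N else 1%N.

(* Linear endomorphisms of E (x) E, E having homogeneous basis (e_i)_{i in I},
   are encoded by the images of the basis vectors e_i (x) e_j, each image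
   given by its coordinate vector on the basis (e_k (x) e_l)_{(k,l)}:
   A (i,j) (k,l) = coefficient of e_k (x) e_l in A (e_i (x) e_j). *)
Definition tlin (I : finType) (K : fieldType) := I * I -> I * I -> K.

(* Composition A o B. *)
Definition tcomp (I : finType) (K : fieldType) (A B : tlin I K) : tlin I K :=
  fun ij kl => \sum_(m : I * I) B ij m * A m kl.

Definition kron (I : finType) (K : fieldType) (x y : I * I) : K :=
  (x == y)%:R.
Arguments kron {I K}.

Section Rmats.
Variables (disp : Order.disp_t) (I : finOrderType disp) (K : fieldType).
Variables (Gamma : zmodType) (eps : Gamma -> Gamma -> K) (q : K) (p : I -> Gamma).

Definition colorR : tlin I K := fun ij kl =>
  let i := ij.1 in let j := ij.2 in
  if i == j then
    q ^ (1 - 2 * (cpi eps (p i))%:Z) * eps (p i) (p i) * kron (i, i) kl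
  else if (i < j)%O then
    (q - q^-1) * kron (i, j) kl + eps (p i) (p j) * kron (j, i) kl
  else eps (p i) (p j) * kron (j, i) kl.

Definition superR : tlin I K := fun ij kl =>
  let i := ij.1 in let j := ij.2 in
  let di := cpi eps (p i) in let dj := cpi eps (p j) in
  if i == j then
    (-1) ^+ di * q ^ (1 - 2 * di%:Z) * kron (i, i) kl
  else if (i < j)%O then
    (q - q^-1) * kron (i, j) kl + (-1) ^+ (di * dj) * kron (j, i) kl
  else (-1) ^+ (di * dj) * kron (j, i) kl.

Definition twistF (sigma : Gamma -> Gamma -> K) : tlin I K := fun ij kl =>
  sigma (p ij.1) (p ij.2) * kron ij kl.

End Rmats.

Definition tid (I : finType) (K : fieldType) : tlin I K := fun ij kl => kron ij kl.
Arguments tid {I K}.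
Definition tinverse (I : finType) (K : fieldType) (A G : tlin I K) : Prop :=
  tcomp G A = tid /\ tcomp A G = tid.

(* Main.v *)
Require Import Defs.
From HB Require Import structures.
From mathcomp Require Import all_boot all_order all_algebra.
From mathcomp Require Import complex.
From mathcomp Require Import reals.
From mathcomp Require Import ring.
From Stdlib Require Import FunctionalExtensionality.
Import Order.TTheory GRing.Theory Num.Theory.
Local Open Scope ring_scope.
Local Open Scope complex_scope.

Theorem mainTheorem4 (R : realType) (Gamma : zmodType)
  (eps : Gamma -> Gamma -> R[i]) (sigma : Gamma -> Gamma -> R[i])
  (q : R[i]) (disp : Order.disp_t) (I : finOrderType disp) (p : I -> Gamma) :
  commutation_factor eps ->
  (forall a b, sigma a b != 0) ->
  (forall a b, eps a b =
     (-1) ^+ (cpi eps a * cpi eps b) * sigma a b / sigma b a) ->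
  q != 0 ->
  forall Finv : tlin I R[i], tinverse (twistF p sigma) Finv ->
  colorR eps q p = tcomp Finv (tcomp (superR eps q p) (twistF p sigma)).
Proof.
move=> _ snz heps qnz Finv [_ hinv].
pose s (x : I * I) := sigma (p x.1) (p x.2).
have hF : forall ij kl, Finv ij kl = kron ij kl / s kl.
  move=> ij kl.
  have := congr1 (fun f => f ij kl) hinv; rewrite /tcomp /tid /twistF /=.
  rewrite (bigD1 kl) //= big1 ?addr0; last first.
    by move=> m /negbTE hm; rewrite /kron hm mulr0 mulr0.
  move=> <-; rewrite /kron eqxx mulr1 mulfK //.
apply: functional_extensionality => ij; apply: functional_extensionality => kl.
rewrite /tcomp.
under eq_bigr => m _ do rewrite hF.
have hin : forall m, \sum_(m' : I * I) twistF p sigma ij m' * superR eps q p m' m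
    = s ij * superR eps q p ij m.
  move=> m; rewrite (bigD1 ij) //= big1 ?addr0.
    by rewrite /twistF /kron eqxx mulr1.
  by move=> m' /negbTE hm; rewrite /twistF /kron eq_sym hm mulr0 mul0r.
under eq_bigr => m _ do rewrite hin.
rewrite (bigD1 kl) //= big1 ?addr0; last first.
  by move=> m /negbTE hm; rewrite /kron hm mul0r mulr0.
rewrite /kron eqxx /= mul1r -/(s ij).
have cpi2 : forall a, eps a a = (-1) ^+ cpi eps a.
  move=> a; rewrite heps mulfK // /cpi; by case: (eps a a == 1).
have cpi01 : forall a, (cpi eps a * cpi eps a = cpi eps a)%N.
  by move=> a; rewrite /cpi; case: (eps a a == 1).
clear hin hF; case: ij => i j; rewrite /colorR /superR /kron /s /=.
case: eqP => [<-|ne].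
  case: (eqVneq (i, i) kl) => [<-|hne]; rewrite ?eqxx ?(negbTE hne) /=.
    rewrite cpi2; field; exact: snz.
  by rewrite !mulr0 mul0r.
have ne' : (j, i) != (i, j) by apply/eqP => -[].
case: (eqVneq (i, j) kl) => [<-|hne1]; rewrite ?eqxx ?(negbTE hne1) ?(negbTE ne') /=.
  case: ifP => _; rewrite ?mulr0 ?addr0 ?mulr1 ?mul0r ?divff ?mulr1 ?snz //; by rewrite mulrAC divff ?snz // mul1r.
case: (eqVneq (j, i) kl) => [<-|hne2]; rewrite ?eqxx ?(negbTE hne2) /=.
  by case: ifP => _; rewrite ?mulr0 ?add0r ?mulr1 heps [sigma _ _ * _]mulrC.
by rewrite !mulr0 !addr0 !if_same mulr0 mul0r.
Qed.
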